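(* Let $G$ be an \{ISK4,wheel\}-free trigraph. Then $G$ admits a clique-cutset or a stable 2-cutset if and only if $G$ admits a good cut-partition.
   Context: A trigraph $G$ consists of a finite vertex set $V(G)$ and an adjacency function $\theta_G:\binom{V(G)}{2}\to\{-1,0,1\}$; for distinct $u,v$ write $uv$ for $\{u,v\}$. The pair $uv$ is strongly adjacent if $\theta_G(uv)=1$, semi-adjacent if $\theta_G(uv)=0$, strongly anti-adjacent if $\theta_G(uv)=-1$; $u,v$ are adjacent if $\theta_G(uv)\ge 0$ and anti-adjacent if $\theta_G(uv)\le 0$. For $X\subseteq V(G)$, $G[X]$ is the trigraph on $X$ with the restricted adjacency function, and $G\setminus X=G[V(G)\setminus X]$. A realization of $G$ is a graph on $V(G)$ obtained by turning each semi-adjacent pair into either an edge or a non-edge (strongly adjacent pairs are edges, strongly anti-adjacent pairs non-edges); the full realization turns all semi-adjacent pairs into edges. A stable set is a set of pairwise anti-adjacent vertices; a strong clique is a set of pairwise strongly adjacent vertices. $G$ is connected if its full realization is connected. A narrow path in $G$ between $a$ and $b$ is an induced subtrigraph whose full realization is a path with endpoints $a$ and $b$. An ISK4 is a graph isomorphic to a subdivision of $K_4$. A wheel is a graph consisting of a chordless cycle of length at least four together with a vertex having at least three neighbors on the cycle. A trigraph is \{ISK4,wheel\}-free if none of its realizations has an induced subgraph that is an ISK4 or a wheel. A cut-partition of $G$ is a partition $(A,B,C)$ of $V(G)$ with $A,B$ non-empty ($C$ possibly empty) such that every vertex of $A$ is strongly anti-adjacent to every vertex of $B$. A clique-cutset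 is a (possibly empty) strong clique $C$ with $G\setminus C$ disconnected; a stable 2-cutset is a stable set $C$ of size two with $G\setminus C$ disconnected. A good cut-partition is a cut-partition $(A,B,C)$ such that either $C$ is a clique-cutset with $|C|\le 3$ (type clique), or $C$ is a stable 2-cutset and each of $G[A\cup C]$ and $G[B\cup C]$ contains a narrow path between the two vertices of $C$ (type stable). *)

(* Defs.v *)
From mathcomp Require Import all_boot.
Set Implicit Arguments. Unset Strict Implicit. Unset Printing Implicit Defensive.

(** Adjacency values: Strong = 1, Semi = 0, Anti = -1. *)
Inductive adj3 := Strong | Semi | Anti.

(** A trigraph on a finite vertex type; the value of [theta v v] is irrelevant
    (never used): only pairs of distinct vertices matter. *)
Record trigraph := Trigraph {
  tvert : finType;
  theta : tvert -> tvert -> adj3;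
  theta_sym : forall u v, theta u v = theta v u
}.

Section Seqs.
Variable V : eqType.

Definition consec (s : seq V) (u v : V) : Prop :=
  exists n, n.+1 < size s /\ nth u s n = u /\ nth u s n.+1 = v.

Definition path_seq (s : seq V) (a b : V) : Prop :=
  [/\ uniq s, head a s = a, last a s = b & 1 <= size s].

End Seqs.

Section Trigraphs.
Variable G : trigraph.
Local Notation V := (tvert G).

Definition strongly_adjacent (u v : V) := u <> v /\ theta u v = Strong.
Definition anti_adjacent (u v : V) := u <> v /\ theta u v <> Strong.
Definition strongly_antiadjacent (u v : V) := u <> v /\ theta u v = Anti.

(** Edge relation of the full realization. *)
Definition fullE (u v : V) : bool :=
  (u != v) && (match theta u v with Anti => false | _ => true end).

Definition connected_on (X : {set V}) : Prop :=
  forall u v, u \in X -> v \in X ->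
    connect (fun x y => [&& x \in X, y \in X & fullE x y]) u v.

Definition disconnected_after (C : {set V}) : Prop := ~ connected_on (~: C).

Definition strong_clique (C : {set V}) : Prop :=
  forall u v, u \in C -> v \in C -> u <> v -> strongly_adjacent u v.

Definition stable_set (C : {set V}) : Prop :=
  forall u v, u \in C -> v \in C -> u <> v -> anti_adjacent u v.

Definition clique_cutset (C : {set V}) : Prop :=
  strong_clique C /\ disconnected_after C.

Definition stable_2cutset (C : {set V}) : Prop :=
  stable_set C /\ #|C| = 2 /\ disconnected_after C.

(** A narrow path between [a] and [b] inside G[X]: an induced subtrigraph whose
    full realization is a path with endpoints [a], [b]. *)
Definition narrow_path_in (X : {set V}) (a b : V) : Prop :=
  exists s : seq V, path_seq s a b /\ {subset s <= X} /\
    forall u v, u \in s -> v \in s -> u != v ->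
      (fullE u v <-> consec s u v \/ consec s v u).

Definition cut_partition (A B C : {set V}) : Prop :=
  [/\ [disjoint A & B] /\ [disjoint A & C] /\ [disjoint B & C],
      A :|: B :|: C = setT, A != set0, B != set0 &
      forall a b, a \in A -> b \in B -> strongly_antiadjacent a b].

Definition good_cut_partition (A B C : {set V}) : Prop :=
  cut_partition A B C /\
  ((clique_cutset C /\ #|C| <= 3) \/
   (stable_2cutset C /\
    exists a b, a != b /\ C = [set a; b] /\
      narrow_path_in (A :|: C) a b /\ narrow_path_in (B :|: C) a b)).

Definition realization (R : rel V) : Prop :=
  [/\ forall u v, R u v = R v u,
      forall u, ~~ R u u,
      forall u v, u != v -> theta u v = Strong -> R u v &
      forall u v, u != v -> theta u v = Anti -> ~~ R u v].

End Trigraphs.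

Section Graphs.
Variable V : finType.
Variable R : rel V.

(** The graph R has an induced subgraph that is a subdivision of K4:
    branch vertices [br i] (i < 4), and for each i < j a path [p i j] from
    [br i] to [br j]; distinct paths meet only in branch vertices, each path
    contains no branch vertex other than its ends, and the edges of R among the
    vertices of these paths are exactly the path edges. *)
Definition has_induced_isk4 : Prop :=
  exists (br : 'I_4 -> V) (p : 'I_4 -> 'I_4 -> seq V),
    [/\ injective br,
        forall i j : 'I_4, i < j -> path_seq (p i j) (br i) (br j) /\ 2 <= size (p i j),
        forall i j m : 'I_4, i < j -> br m \in p i j -> m = i \/ m = j,
        forall (i j k l : 'I_4) x, i < j -> k < l -> (i, j) <> (k, l) ->
          x \in p i j -> x \in p k l -> exists m, x = br m &
        forall u v, (exists i j : 'I_4, i < j /\ u \in p i j) ->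
                    (exists i j : 'I_4, i < j /\ v \in p i j) ->
          (R u v <-> exists i j : 'I_4, i < j /\ (consec (p i j) u v \/ consec (p i j) v u))].

Definition hole (s : seq V) (x0 : V) : Prop :=
  [/\ uniq s, 4 <= size s &
      forall i j, i < size s -> j < size s -> i != j ->
        (R (nth x0 s i) (nth x0 s j) <->
           (j == i.+1 %% size s) || (i == j.+1 %% size s))].

Definition has_induced_wheel : Prop :=
  exists (x : V) (s : seq V), hole s x /\ x \notin s /\ 3 <= count (R x) s.

End Graphs.

Definition ISK4_wheel_free (G : trigraph) : Prop :=
  forall R : rel (tvert G), realization R ->
    ~ has_induced_isk4 R /\ ~ has_induced_wheel R.

(* Main.v *)
Require Import Defs.
From mathcomp Require Import all_boot.
From Stdlib Require Import Classical.
Set Implicit Arguments. Unset Strict Implicit. Unset Printing Implicit Defensive.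

Section S.
Variable G : trigraph.
Local Notation V := (tvert G).

Definition eX (X : {set V}) : rel V := fun x y => [&& x \in X, y \in X & fullE x y].

Lemma fullE_sym (u v : V) : fullE u v = fullE v u.
Proof. by rewrite /fullE eq_sym theta_sym. Qed.

Lemma eX_sym (X : {set V}) : symmetric (eX X).
Proof. move=> x y; rewrite /eX fullE_sym; by case: (x \in X); case: (y \in X). Qed.

Lemma connect_symX (X : {set V}) (x y : V) : connect (eX X) x y = connect (eX X) y x.
Proof. exact: (sym_connect_sym (eX_sym X)). Qed.

Lemma connect_mono (X Y : {set V}) (x y : V) : X \subset Y -> connect (eX X) x y -> connect (eX Y) x y.
Proof.
move=> /subsetP sXY; apply: connect_sub => u v /and3P [hu hv he].
by apply: connect1; rewrite /eX sXY // sXY // he.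
Qed.

Lemma fullE_anti (u v : V) : u != v -> ~~ fullE u v -> theta u v = Anti.
Proof. by rewrite /fullE => -> /=; case: (theta u v). Qed.

Lemma anti_fullE (u v : V) : theta u v = Anti -> ~~ fullE u v.
Proof. by rewrite /fullE => ->; rewrite andbF. Qed.

Fixpoint ipath (s : seq V) : bool :=
  match s with
  | [::] => false
  | x :: t => match t with
              | [::] => true
              | y :: t' => [&& fullE x y, x \notin t, ~~ has (fullE x) t' & ipath t]
              end
  end.

Lemma consec_cons (x y : V) s u v :
  consec (x :: y :: s) u v <-> (x = u /\ y = v) \/ consec (y :: s) u v.
Proof.
rewrite /consec; split.
- move=> [[|n] [hn [h1 h2]]].
    by left; split; [exact: h1|exact: h2].
  by right; exists n.
- move=> [[<- <-]|[n [hn [h1 h2]]]]; first by exists 0.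
  by exists n.+1.
Qed.

Lemma consec_mem s (u v : V) : consec s u v -> u \in s /\ v \in s.
Proof.
rewrite /consec; move=> [n [hn [h1 h2]]]; split.
- by rewrite -h1 mem_nth // ltnW.
- by rewrite -h2 mem_nth.
Qed.

Lemma consec1 (x u v : V) : ~ consec [:: x] u v.
Proof. by rewrite /consec; move=> [n [hn _]]. Qed.

Lemma ipath_head_case x y t (v : V) :
  ipath [:: x, y & t] -> v \in y :: t ->
  (fullE x v <-> v = y) /\
  (consec [:: x, y & t] x v \/ consec [:: x, y & t] v x <-> v = y).
Proof.
move=> /= /and4P [hxy hxt hnt hip] hv.
have ux : forall w, w \in y :: t -> w != x.
  by move=> w hw; apply/eqP => ewx; rewrite -ewx hw in hxt.
split.
- split; last by move=> ->.
  move=> hxv; move: hv; rewrite in_cons => /orP [/eqP //|hvt].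
  by move/hasPn: hnt => /(_ v hvt); rewrite hxv.
- split.
  + move=> [/consec_cons [[_ ->]//|/consec_mem [h _]]|/consec_cons [[ex _]|/consec_mem [_ h]]].
    * by rewrite h in hxt.
    * by move: (ux v hv); rewrite ex eqxx.
    * by rewrite h in hxt.
  + by move=> ->; left; apply/consec_cons; left.
Qed.

Lemma ipath_narrow s : ipath s ->
  uniq s /\ forall u v, u \in s -> v \in s -> u != v ->
    (fullE u v <-> consec s u v \/ consec s v u).
Proof.
elim: s => [//|x t IH].
case: t IH => [|y t] IH.
  move=> _; split => // u v; rewrite !inE => /eqP -> /eqP ->; by rewrite eqxx.
move=> hp; have hp' := hp.
move: hp' => /= /and4P [hxy hxt hnt hip].
have [IHu IHi] := IH hip.
split; first by rewrite /= hxt.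
move=> u v; rewrite (in_cons x (y :: t)) (in_cons x (y :: t)).
case/orP => [/eqP ->|hu]; case/orP => [/eqP ->|hv].
- by rewrite eqxx.
- move=> _; have [h1 h2] := ipath_head_case hp hv; by rewrite h1 h2.
- move=> _; have [h1 h2] := ipath_head_case hp hu.
  rewrite fullE_sym h1 -h2; tauto.
- move=> huv; rewrite IHi //.
  have nx : forall w, w \in y :: t -> x <> w.
    by move=> w hw ewx; rewrite ewx hw in hxt.
  split.
  + by case=> h; [left|right]; apply/consec_cons; right.
  + case=> /consec_cons [[h _]|h]; try (by case: (nx _ hu h)); try (by case: (nx _ hv h)); tauto.
Qed.

Lemma ipath_tail (x : V) t : ipath (x :: t) -> t != [::] -> ipath t.
Proof. by case: t => [//|y t] /= /and4P [_ _ _ ->]. Qed.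

Lemma ipath_suffix (s1 t : seq V) : ipath (s1 ++ t) -> t != [::] -> ipath t.
Proof.
elim: s1 => [//|x s1 IH] /= h ht; apply: IH => //.
apply: (ipath_tail h); by case: s1 h => [|? ?]; [case: t ht|].
Qed.

Lemma split_last (P : pred V) s : has P s ->
  exists s1 y s2, [/\ s = s1 ++ y :: s2, P y & ~~ has P s2].
Proof.
elim: s => [//|x s IH] /=.
case hs: (has P s).
- move=> _; have [s1 [y [s2 [-> hy hn]]]] := IH hs.
  by exists (x :: s1), y, s2.
- move=> /= hx; rewrite orbF in hx; exists [::], x, s; by rewrite hs.
Qed.

Lemma ipath_exists (X : {set V}) (a : V) p : a \in X -> path (eX X) a p ->
  exists s, [/\ ipath (a :: s), last a s = last a p & {subset a :: s <= X}].
Proof.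
elim: p a => [|x p IH] a ha.
  by move=> _; exists [::]; split => // z; rewrite inE => /eqP ->.
move=> /= /andP [/and3P [_ hx hax] hp].
have [s [hip hl hsub]] := IH x hx hp.
have lastE : forall s1 y s2, x :: s = s1 ++ y :: s2 -> last y s2 = last x p.
  move=> s1 y s2 e; rewrite -hl.
  have -> : last x s = last x (x :: s) by [].
  by rewrite e last_cat.
case ha': (a \in x :: s).
- case/splitPr: ha' hip hsub lastE => s1 s2 hip hsub lastE.
  exists s2; split.
  + exact: (ipath_suffix hip).
  + exact: (lastE s1 a s2).
  + by move=> z hz; apply: hsub; rewrite mem_cat hz orbT.
- have hh : has (fullE a) (x :: s) by rewrite /= hax.
  have [s1 [y [s2 [e hy hn]]]] := split_last hh.
  exists (y :: s2); split.
  + have hy2 : ipath (y :: s2).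
      by apply: (@ipath_suffix s1 (y :: s2)) => //; rewrite -e.
    have hna : a \notin y :: s2.
      by apply/negP => hin; move: ha'; rewrite e mem_cat hin orbT.
    move: hy2 hna; rewrite /= hy hn /= => -> ->; by case: s2 {e hn}.
  + exact: (lastE s1 y s2 e).
  + move=> z; rewrite in_cons => /orP [/eqP -> //|hz]; apply: hsub.
    by rewrite e mem_cat hz orbT.
Qed.

Lemma ipath_to_narrow (X : {set V}) (a : V) s :
  ipath (a :: s) -> {subset a :: s <= X} -> narrow_path_in X a (last a s).
Proof.
move=> hip hsub; have [hu hi] := ipath_narrow hip.
exists (a :: s); split => //.
Qed.

Lemma narrow_of_connect (X : {set V}) (a b : V) : a \in X -> connect (eX X) a b -> narrow_path_in X a b.
Proof.
move=> ha /connectP [p hp ->].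
have [s [hip hl hsub]] := ipath_exists ha hp.
rewrite -hl; exact: ipath_to_narrow.
Qed.


Lemma narrow_mono (X Y : {set V}) (a b : V) :
  X \subset Y -> narrow_path_in X a b -> narrow_path_in Y a b.
Proof.
move=> /subsetP sXY [s [hs [hsub hi]]]; exists s; split => //; split => //.
by move=> z hz; apply: sXY; apply: hsub.
Qed.

Lemma disc_uv (C : {set V}) : disconnected_after C ->
  exists u v, [/\ u \in ~: C, v \in ~: C & ~~ connect (eX (~: C)) u v].
Proof.
rewrite /disconnected_after /connected_on => h.
apply: NNPP => hn; apply: h => u v hu hv; change (connect (eX (~: C)) u v).
case e: (connect (eX (~: C)) u v); first by [].
by exfalso; apply: hn; exists u, v; rewrite e.
Qed.

Definition comp (C : {set V}) (w : V) : {set V} :=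
  [set z in ~: C | connect (eX (~: C)) w z].

Lemma comp_closed (C : {set V}) w z z' :
  z \in comp C w -> z' \in ~: C -> fullE z z' -> z' \in comp C w.
Proof.
rewrite !inE => /andP [hz hc] hz' he; rewrite hz' /=.
apply: (connect_trans hc); apply: connect1; by rewrite /eX !inE hz hz'.
Qed.

Lemma comp_path (C : {set V}) w z p :
  z \in comp C w -> path (eX (~: C)) z p -> path (eX (comp C w)) z p.
Proof.
elim: p z => [//|y p IH] z hz /= /andP [/and3P [h1 h2 h3] hp].
have hy : y \in comp C w by exact: (comp_closed hz h2 h3).
by rewrite /eX hz hy h3 /= IH.
Qed.

Lemma comp_conn (C : {set V}) w z : w \in ~: C ->
  z \in comp C w -> connect (eX (comp C w)) w z.
Proof.
move=> hw hz; have := hz; rewrite inE => /andP [_ /connectP [p hp ->]].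
apply/connectP; exists p => //; apply: comp_path => //.
by rewrite inE hw connect0.
Qed.

Lemma comp_cut (C : {set V}) w u : w \in ~: C -> u \in ~: C -> u \notin comp C w ->
  cut_partition (comp C w) (~: C :\: comp C w) C.
Proof.
move=> hw hu hnu; split.
- split; [|split]; rewrite disjoint_subset; apply/subsetP => x; rewrite !inE.
  + by case: (x \in C); case: connect.
  + by case: (x \in C).
  + by case: (x \in C).
- by apply/setP => x; rewrite !inE; case: (x \in C); case: connect.
- by apply/set0Pn; exists w; rewrite inE hw connect0.
- by apply/set0Pn; exists u; rewrite inE hu hnu.
- move=> a b ha; rewrite inE => /andP [hb hbC].
  have hab : a != b by apply/eqP => e; rewrite -e ha in hb.
  split; first by apply/eqP.
  apply: fullE_anti => //; apply/negP => he.
  by move: hb; rewrite (comp_closed ha hbC he).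
Qed.

Lemma cut_disc (A B C : {set V}) : cut_partition A B C -> disconnected_after C.
Proof.
case=> [[dAB [dAC dBC]] hU hA hB hanti].
move/set0Pn: hA => [x hx]; move/set0Pn: hB => [y hy].
have hxC : x \in ~: C by rewrite inE (disjointFr dAC hx).
have hyC : y \in ~: C by rewrite inE (disjointFr dBC hy).
move=> hc; have := hc x y hxC hyC.
move=> /connectP [p hp ey].
have stay : forall z q, z \in A -> path (eX (~: C)) z q -> last z q \in A.
  move=> z q; elim: q z => [//|w q IH] z hz /= /andP [/and3P [_ hw he] hq].
  apply: IH hq.
  have : w \in A :|: B :|: C by rewrite hU inE.
  rewrite !inE; move: hw; rewrite inE => /negbTE ->; rewrite orbF.
  case/orP => // hwB.
  have [_ ht] := hanti z w hz hwB.
  by move: he; rewrite /fullE ht andbF.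
have := stay x p hx hp; rewrite -ey => hyA.
by move: hy; rewrite (disjointFr dAB hyA).
Qed.

Lemma single_good (K : {set V}) (c d : V) :
  K != set0 -> c \notin K -> d \notin K -> c != d ->
  (forall x, x \in K -> ~~ fullE d x) ->
  (forall x y, x \in K -> y \notin K -> y != c -> y != d -> ~~ fullE x y) ->
  exists A B C' : {set V}, good_cut_partition A B C'.
Proof.
move=> hK hc hd hcd hdx hxy.
have hcp : cut_partition K (~: (K :|: [set c])) [set c].
  split.
  - split; [|split]; rewrite disjoint_subset; apply/subsetP => x; rewrite !inE.
    + by case: (x \in K).
    + by move=> hx; apply/eqP => e; rewrite -e hx in hc.
    + by case: (x == c); rewrite ?orbT ?orbF.
  - by apply/setP => x; rewrite !inE; case: (x \in K); case: (x == c).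
  - exact: hK.
  - apply/set0Pn; exists d; rewrite !inE negb_or hd /= eq_sym; exact: hcd.
  - move=> x y hx; rewrite !inE negb_or => /andP [hy hyc].
    have hxy' : x != y by apply/eqP => e; rewrite -e hx in hy.
    split; first by apply/eqP.
    apply: fullE_anti => //.
    case: (eqVneq y d) => [->|hyd].
    + by rewrite fullE_sym; apply: hdx.
    + by apply: hxy.
exists K, (~: (K :|: [set c])), [set c]; split => //; left; split; last by rewrite cards1.
split; last exact: (cut_disc hcp).
by move=> u v; rewrite !inE => /eqP -> /eqP ->.
Qed.

Lemma consec2 (x y u v : V) : consec [:: x; y] u v -> x = u /\ y = v.
Proof. by case/consec_cons => // /consec1. Qed.

Lemma clique_small (C : {set V}) : ISK4_wheel_free G -> strong_clique C -> #|C| <= 3.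
Proof.
move=> hf hc; rewrite leqNgt; apply/negP => h4.
have hreal : realization (@fullE G).
  split.
  - exact: fullE_sym.
  - by move=> u; rewrite /fullE eqxx.
  - by move=> u v huv ht; rewrite /fullE huv ht.
  - by move=> u v huv ht; rewrite /fullE huv ht.
apply: (proj1 (hf _ hreal)).
pose br (i : 'I_4) : V := enum_val (widen_ord h4 i).
have br_in : forall i, br i \in C by move=> i; exact: enum_valP.
have br_inj : injective br.
  move=> i j /enum_val_inj e; apply/val_inj; exact: (congr1 val e).
have br_neq : forall i j, i != j -> br i != br j.
  by move=> i j hij; apply/eqP => /br_inj e; rewrite e eqxx in hij.
exists br, (fun i j => [:: br i; br j]); split.
- exact: br_inj.
- move=> i j hij; split => //; split => //=.
  rewrite inE andbT; apply: br_neq; by rewrite neq_ltn hij.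
- move=> i j m hij; rewrite !inE => /orP [/eqP /br_inj ->|/eqP /br_inj ->]; by [left|right].
- move=> i j k l x _ _ _; rewrite !inE => /orP [/eqP ->|/eqP ->] _; by eexists.
- move=> u v [i [j [_ hu]]] [k [l [_ hv]]].
  have [mu ->] : exists m, u = br m.
    by move: hu; rewrite !inE => /orP [/eqP ->|/eqP ->]; eexists.
  have [mv ->] : exists m, v = br m.
    by move: hv; rewrite !inE => /orP [/eqP ->|/eqP ->]; eexists.
  split.
  + move=> hfe.
    have hne : mu != mv.
      by apply/eqP => e; move: hfe; rewrite e /fullE eqxx.
    case: (ltngtP mu mv) => h.
    * exists mu, mv; split => //; left; exists 0; by split.
    * exists mv, mu; split => //; right; exists 0; by split.
    * by move: hne; rewrite (val_inj h) eqxx.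
  + move=> [i' [j' [hij [/consec2 [e1 e2]|/consec2 [e1 e2]]]]].
    * have hn : br mu != br mv by rewrite -e1 -e2; apply: br_neq; rewrite neq_ltn hij.
      have [_ ht] := hc _ _ (br_in mu) (br_in mv) (elimN eqP hn).
      by rewrite /fullE hn ht.
    * have hn : br mu != br mv by rewrite -e1 -e2 eq_sym; apply: br_neq; rewrite neq_ltn hij.
      have [_ ht] := hc _ _ (br_in mu) (br_in mv) (elimN eqP hn).
      by rewrite /fullE hn ht.
Qed.

Lemma stable_good (C : {set V}) : stable_2cutset C ->
  exists A B C' : {set V}, good_cut_partition A B C'.
Proof.
move=> hs; have hs' := hs; case: hs' => [hst [hc2 hdisc]].
have /cards2P [a [b [hab eC]]] : #|C| == 2 by apply/eqP.
have [u [v [hu hv huv]]] := disc_uv hdisc.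
have hvu : v \notin comp C u by rewrite inE hv /= huv.
have hcut := comp_cut hu hv hvu.
have haC : a \in C by rewrite eC !inE eqxx.
have hbC : b \in C by rewrite eC !inE eqxx orbT.
have [_ hnot] := hst a b haC hbC (elimN eqP hab).
move: hnot; case ht: (theta a b); [move=> h; by case: h| move=> _ | move=> _].
- exists (comp C u), (~: C :\: comp C u), C; split => //; right; split => //.
  exists a, b; split => //; split => //.
  have hip : ipath [:: a; b] by rewrite /= /fullE hab ht inE hab.
  split; apply: (@ipath_to_narrow _ a [:: b]) => // z; rewrite !inE;
    case/orP => /eqP ->; by rewrite ?haC ?hbC orbT.
- have hnab : ~~ fullE a b by rewrite /fullE ht andbF.
  have notC : forall y, y != a -> y != b -> y \in ~: C.
    by move=> y h1 h2; rewrite inE eC !inE negb_or h1 h2.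
  have attach : forall w, w \in ~: C ->
      ((exists x, x \in comp C w /\ fullE a x) /\ (exists y, y \in comp C w /\ fullE b y))
      \/ exists A B C' : {set V}, good_cut_partition A B C'.
    move=> w hw.
    have hK : comp C w != set0 by apply/set0Pn; exists w; rewrite inE hw connect0.
    have haK : a \notin comp C w by rewrite inE inE haC.
    have hbK : b \notin comp C w by rewrite inE inE hbC.
    have clo : forall x y, x \in comp C w -> y \notin comp C w -> y != a -> y != b ->
        ~~ fullE x y.
      move=> x y hx hy h1 h2; apply/negP => he.
      by move: hy; rewrite (comp_closed hx (notC y h1 h2) he).
    case: (classic (exists x, x \in comp C w /\ fullE a x)) => hA; last first.
      right; apply: (single_good hK hbK haK).
      - by rewrite eq_sym.
      - by move=> x hx; apply/negP => he; apply: hA; exists x.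
      - by move=> x y hx hy h1 h2; apply: clo.
    case: (classic (exists y, y \in comp C w /\ fullE b y)) => hB; last first.
      right; apply: (single_good hK haK hbK hab).
      - by move=> x hx; apply/negP => he; apply: hB; exists x.
      - by move=> x y hx hy h1 h2; apply: clo.
    by left.
  have npath : forall w, w \in ~: C ->
      (exists x, x \in comp C w /\ fullE a x) -> (exists y, y \in comp C w /\ fullE b y) ->
      narrow_path_in (comp C w :|: C) a b.
    move=> w hw [x [hx hax]] [y [hy hby]].
    have sub : comp C w \subset comp C w :|: C by apply/subsetP => z hz; rewrite inE hz.
    have hX : forall z, z \in comp C w -> z \in comp C w :|: C by move=> z hz; rewrite inE hz.
    have hCX : forall z, z \in C -> z \in comp C w :|: C by move=> z hz; rewrite inE hz orbT.
    apply: narrow_of_connect; first exact: hCX.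
    apply: (connect_trans (y := x)).
      by apply: connect1; rewrite /eX hCX // hX // hax.
    apply: (connect_trans (y := w)).
      by rewrite connect_symX; apply: (connect_mono sub); apply: comp_conn.
    apply: (connect_trans (y := y)).
      by apply: (connect_mono sub); apply: comp_conn.
    by apply: connect1; rewrite /eX (hX y hy) (hCX b hbC) fullE_sym hby.
  case: (attach u hu) => [[hxu hyu]|//].
  case: (attach v hv) => [[hxv hyv]|//].
  exists (comp C u), (~: C :\: comp C u), C; split => //; right; split => //.
  exists a, b; split => //; split => //; split; first exact: (npath u).
  apply: (narrow_mono (X := comp C v :|: C)); last exact: (npath v).
  apply/subsetP => z; rewrite !inE => /orP [/andP [hz hcz]|->]; last by rewrite orbT.
  have hnc : ~~ connect (eX (~: C)) u z.
    apply/negP => hcu; move: huv; rewrite (connect_trans hcu) //; by rewrite connect_symX.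
  by rewrite hz hnc.
Qed.

End S.

Theorem proposition4p2 (G : trigraph) :
  ISK4_wheel_free G ->
  ((exists C : {set tvert G}, clique_cutset C) \/
   (exists C : {set tvert G}, stable_2cutset C)) <->
  (exists A B C : {set tvert G}, good_cut_partition A B C).
Proof.
move=> hf; split.
- case=> [[C [hcl hd]]|[C hs]]; last exact: stable_good hs.
  have h3 := clique_small hf hcl.
  have [u [v [hu hv huv]]] := disc_uv hd.
  have hvu : v \notin comp C u by rewrite inE hv /= huv.
  exists (comp C u), (~: C :\: comp C u), C; split; first exact: comp_cut hu hv hvu.
  by left.
- case=> A [B [C [_ [[hcl _]|[hst _]]]]]; [left|right]; by exists C.
Qed.
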